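(* Consider each of the following smooth families of functions $F_{\mathbf c,\mathbf s}:\mathbb{R}^2\to\mathbb{R}$ of $\mathbf x=(x,y)$, with parameters $\mathbf c$ (possibly absent) and $\mathbf s=(s_1,s_2)$, together with the induced family of maps $\mathbf f_{\mathbf c}:\mathbb{R}^2\to\mathbb{R}^2$ between planes, and the associated number $N$: (1) Fold ($A_2$), $N=2$: $F_{\mathbf s}=-s_1x+s_2y+\tfrac12x^2-\tfrac13y^3$, $\mathbf f(x,y)=(x,\,y^2)$. (2) Cusp ($A_3$), $N=3$: $F_{\mathbf s}=-s_1x+s_2y+\tfrac12x^2-\tfrac12s_1y^2-\tfrac14y^4$, $\mathbf f(x,y)=(x,\,xy+y^3)$. (3) Swallowtail ($A_4$), $N=4$: $F_{c,\mathbf s}=s_1x-s_2y-\tfrac12s_2x^2+\tfrac12y^2-\tfrac13cx^3-\tfrac15x^5$, $\mathbf f_c(x,y)=(xy+cx^2+x^4,\,y)$. (4) Elliptic umbilic ($D_4^-$), $N=4$: $F_{c,\mathbf s}=s_1x+s_2y+c(x^2+y^2)+x^3-3xy^2$, $\mathbf f_c(x,y)=(3y^2-3x^2-2cx,\,6xy-2cy)$. (5) Hyperbolic umbilic ($D_4^+$), $N=4$: $F_{c,\mathbf s}=s_1x+s_2y+cxy+x^3+y^3$, $\mathbf f_c(x,y)=(-3x^2-cy,\,-3y^2-cx)$. (6) Butterfly ($A_5$), $N=5$: $F_{\mathbf c,\mathbf s}=x^6+c_1x^4+c_2x^3+s_2x^2+s_1x+\tfrac12y^2-s_2y$, $\mathbf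 f_{\mathbf c}(x,y)=(-2xy-3c_2x^2-4c_1x^3-6x^5,\,y)$. (7) Parabolic umbilic ($D_5$), $N=5$: $F_{\mathbf c,\mathbf s}=x^2y+y^4+c_1x^2+c_2y^2-s_1x-s_2y$, $\mathbf f_{\mathbf c}(x,y)=(2c_1x+2xy,\,2c_2y+x^2+4y^3)$. (8) Wigwam ($A_6$), $N=6$: $F_{\mathbf c,\mathbf s}=x^7+c_1x^5+c_2x^4+c_3x^3+s_2x^2+s_1x+\tfrac12y^2-s_2y$, $\mathbf f_{\mathbf c}(x,y)=(-2xy-3c_3x^2-4c_2x^3-5c_1x^4-7x^6,\,y)$. (9) Symbolic umbilic ($E_6$), $N=6$: $F_{\mathbf c,\mathbf s}=x^3+y^4+c_1xy^2+c_2xy+c_3y^2+s_2y+s_1x$, $\mathbf f_{\mathbf c}(x,y)=(-3x^2-c_1y^2-c_2y,\,-4y^3-2c_1xy-c_2x-2c_3y)$. (10) $2^{\rm nd}$ elliptic umbilic ($D_6^-$), $N=6$: $F_{\mathbf c,\mathbf s}=x^2y-y^5+c_1y^4+c_2y^3+c_3y^2+s_2y+s_1x$, $\mathbf f_{\mathbf c}(x,y)=(-2xy,\,-x^2+5y^4-4c_1y^3-3c_2y^2-2c_3y)$. (11) $2^{\rm nd}$ hyperbolic umbilic ($D_6^+$), $N=6$: $F_{\mathbf c,\mathbf s}=x^2y+y^5+c_1y^4+c_2y^3+c_3y^2+s_2y+s_1x$, $\mathbf f_{\mathbf c}(x,y)=(-2xy,\,-x^2-5y^4-4c_1y^3-3c_2y^2-2c_3y)$.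 For any of these families, any parameter value $\mathbf c$, and any non-caustic point $\mathbf s$ lying in the region of the target plane giving rise to the maximum number $N$ of real pre-images $\mathbf x_1,\dots,\mathbf x_N$ (i.e. critical points of $F_{\mathbf c,\mathbf s}$), the magnifications $\mathfrak M_i=\mathfrak M(\mathbf x_i;\mathbf s)$ satisfy $$\sum_{i=1}^{N}\mathfrak M_i=0.$$
   Context: For each family, a critical point $\mathbf x_0$ of $F_{\mathbf c,\mathbf s}$ (i.e. $\operatorname{grad}F_{\mathbf c,\mathbf s}(\mathbf x_0)=\mathbf 0$) is the same as a pre-image of $\mathbf s$ under $\mathbf f_{\mathbf c}$, i.e. $\mathbf f_{\mathbf c}(\mathbf x_0)=\mathbf s$. The magnification at such a point is $\mathfrak M(\mathbf x_0;\mathbf s)=1/\mathrm{Gauss}(\mathbf x_0,F_{\mathbf c,\mathbf s}(\mathbf x_0))$, the reciprocal of the Gaussian curvature of the graph of $F_{\mathbf c,\mathbf s}$ at that point; this equals $1/\det(\operatorname{Hess}F_{\mathbf c,\mathbf s})(\mathbf x_0)=1/\det(\operatorname{Jac}\mathbf f_{\mathbf c})(\mathbf x_0)$. A caustic point is a target point $\mathbf s$ that is the image under $\mathbf f_{\mathbf c}$ of a point where $\det(\operatorname{Jac}\mathbf f_{\mathbf c})=0$; a non-caustic point is one that is not caustic, so all its magnifications are finite. *)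

(* Defs.v *)
From Stdlib Require Import Reals List.
From Coquelicot Require Import Coquelicot.
Import ListNotations.
Open Scope R_scope.

Inductive catastrophe : Type :=
  | Fold | Cusp | Swallowtail | EllipticUmbilic | HyperbolicUmbilic
  | Butterfly | ParabolicUmbilic | Wigwam | SymbolicUmbilic
  | EllipticUmbilic2 | HyperbolicUmbilic2.

Definition Nmax (fam : catastrophe) : nat :=
  match fam with
  | Fold => 2 | Cusp => 3
  | Swallowtail | EllipticUmbilic | HyperbolicUmbilic => 4
  | Butterfly | ParabolicUmbilic => 5
  | Wigwam | SymbolicUmbilic | EllipticUmbilic2 | HyperbolicUmbilic2 => 6
  end.

(* The parameter vector c is given as (c1, c2, c3); families with fewer
   parameters ignore the unused components (families with a single
   parameter c use c1). *)

Definition Fpot (fam : catastrophe) (c1 c2 c3 s1 s2 x y : R) : R :=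
  match fam with
  | Fold => - s1 * x + s2 * y + /2 * x^2 - /3 * y^3
  | Cusp => - s1 * x + s2 * y + /2 * x^2 - /2 * s1 * y^2 - /4 * y^4
  | Swallowtail => s1 * x - s2 * y - /2 * s2 * x^2 + /2 * y^2 - /3 * c1 * x^3 - /5 * x^5
  | EllipticUmbilic => s1 * x + s2 * y + c1 * (x^2 + y^2) + x^3 - 3 * x * y^2
  | HyperbolicUmbilic => s1 * x + s2 * y + c1 * x * y + x^3 + y^3
  | Butterfly => x^6 + c1 * x^4 + c2 * x^3 + s2 * x^2 + s1 * x + /2 * y^2 - s2 * y
  | ParabolicUmbilic => x^2 * y + y^4 + c1 * x^2 + c2 * y^2 - s1 * x - s2 * y
  | Wigwam => x^7 + c1 * x^5 + c2 * x^4 + c3 * x^3 + s2 * x^2 + s1 * x + /2 * y^2 - s2 * y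
  | SymbolicUmbilic => x^3 + y^4 + c1 * x * y^2 + c2 * x * y + c3 * y^2 + s2 * y + s1 * x
  | EllipticUmbilic2 => x^2 * y - y^5 + c1 * y^4 + c2 * y^3 + c3 * y^2 + s2 * y + s1 * x
  | HyperbolicUmbilic2 => x^2 * y + y^5 + c1 * y^4 + c2 * y^3 + c3 * y^2 + s2 * y + s1 * x
  end.

Definition fmap1 (fam : catastrophe) (c1 c2 c3 x y : R) : R :=
  match fam with
  | Fold => x
  | Cusp => x
  | Swallowtail => x * y + c1 * x^2 + x^4
  | EllipticUmbilic => 3 * y^2 - 3 * x^2 - 2 * c1 * x
  | HyperbolicUmbilic => - 3 * x^2 - c1 * y
  | Butterfly => - 2 * x * y - 3 * c2 * x^2 - 4 * c1 * x^3 - 6 * x^5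
  | ParabolicUmbilic => 2 * c1 * x + 2 * x * y
  | Wigwam => - 2 * x * y - 3 * c3 * x^2 - 4 * c2 * x^3 - 5 * c1 * x^4 - 7 * x^6
  | SymbolicUmbilic => - 3 * x^2 - c1 * y^2 - c2 * y
  | EllipticUmbilic2 => - 2 * x * y
  | HyperbolicUmbilic2 => - 2 * x * y
  end.

Definition fmap2 (fam : catastrophe) (c1 c2 c3 x y : R) : R :=
  match fam with
  | Fold => y^2
  | Cusp => x * y + y^3
  | Swallowtail => y
  | EllipticUmbilic => 6 * x * y - 2 * c1 * y
  | HyperbolicUmbilic => - 3 * y^2 - c1 * x
  | Butterfly => y
  | ParabolicUmbilic => 2 * c2 * y + x^2 + 4 * y^3
  | Wigwam => y
  | SymbolicUmbilic => - 4 * y^3 - 2 * c1 * x * y - c2 * x - 2 * c3 * y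
  | EllipticUmbilic2 => - x^2 + 5 * y^4 - 4 * c1 * y^3 - 3 * c2 * y^2 - 2 * c3 * y
  | HyperbolicUmbilic2 => - x^2 - 5 * y^4 - 4 * c1 * y^3 - 3 * c2 * y^2 - 2 * c3 * y
  end.

Definition fmap (fam : catastrophe) (c1 c2 c3 : R) (p : R * R) : R * R :=
  (fmap1 fam c1 c2 c3 (fst p) (snd p), fmap2 fam c1 c2 c3 (fst p) (snd p)).

Definition jacdet (fam : catastrophe) (c1 c2 c3 : R) (p : R * R) : R :=
  let x := fst p in let y := snd p in
  Derive (fun t => fmap1 fam c1 c2 c3 t y) x * Derive (fun t => fmap2 fam c1 c2 c3 x t) y
  - Derive (fun t => fmap1 fam c1 c2 c3 x t) y * Derive (fun t => fmap2 fam c1 c2 c3 t y) x.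

Definition magnification (fam : catastrophe) (c1 c2 c3 : R) (p : R * R) : R :=
  / jacdet fam c1 c2 c3 p.

Definition caustic (fam : catastrophe) (c1 c2 c3 : R) (s : R * R) : Prop :=
  exists p, fmap fam c1 c2 c3 p = s /\ jacdet fam c1 c2 c3 p = 0.

Definition sumR (l : list R) : R := fold_right Rplus 0 l.

(* Main.v *)
Require Import Defs.
From Stdlib Require Import Reals List.
From Coquelicot Require Import Coquelicot.
From Stdlib Require Import Lra Lia Permutation Classical.
Import ListNotations.
Open Scope R_scope.

Fixpoint peval (p : list R) (y : R) : R :=
  match p with [] => 0 | a :: q => a + y * peval q y end.
Fixpoint pderaux (k : R) (p : list R) : list R :=
  match p with [] => [] | a :: q => (k * a) :: pderaux (k+1) q end.
Definition pder (p : list R) := match p with [] => [] | _ :: q => pderaux 1 q end.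
Fixpoint padd (p q : list R) : list R :=
  match p, q with
  | [], _ => q
  | _, [] => p
  | a :: p', b :: q' => (a + b) :: padd p' q'
  end.
Definition pscale (c : R) (p : list R) := map (Rmult c) p.
Fixpoint pmul (p q : list R) : list R :=
  match p with [] => [] | a :: p' => padd (pscale a q) (0 :: pmul p' q) end.
Fixpoint plin (rs : list R) : list R :=
  match rs with [] => [1] | r :: rs' => padd (0 :: plin rs') (pscale (-r) (plin rs')) end.
Definition zeroL (p : list R) := List.Forall (fun a => a = 0) p.

Lemma peval_zero p y : zeroL p -> peval p y = 0.
Proof. induction 1; simpl; auto. rewrite IHForall, H; ring. Qed.

Lemma pderaux_zero k p : zeroL p -> zeroL (pderaux k p).
Proof. intros H; revert k; induction H; simpl; intros; constructor; [rewrite H; ring|apply IHForall]. Qed.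

Lemma pder_zero p y : zeroL p -> peval (pder p) y = 0.
Proof. intros H; apply peval_zero. destruct H; simpl. constructor. apply pderaux_zero; auto. Qed.

Lemma pdiv_ex r p : exists q c, (forall y, peval p y = (y - r) * peval q y + c)
  /\ length q = pred (length p) /\ (zeroL q -> c = 0 -> zeroL p).
Proof.
  induction p as [|a p IH].
  - exists [], 0; simpl; repeat split; intros; try ring. constructor.
  - destruct p as [|b p'].
    + exists [], a; simpl; repeat split; intros; try ring. subst; repeat constructor.
    + destruct IH as [q [c [H1 [H2 H3]]]].
      exists (c :: q), (a + r * c). repeat split.
      * intros y. change (peval (a :: b :: p') y) with (a + y * peval (b :: p') y).
        rewrite H1. simpl. ring.
      * simpl in *. rewrite H2. reflexivity.
      * intros Hz Hc. apply Forall_cons_iff in Hz; destruct Hz as [Hc0 Hq0]. constructor.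
        -- rewrite Hc0 in Hc; lra.
        -- apply H3; auto.
Qed.

Lemma zero_poly rs : forall p, NoDup rs -> (length p <= length rs)%nat ->
  (forall r, In r rs -> peval p r = 0) -> zeroL p.
Proof.
  induction rs as [|r rs IH]; intros p Hnd Hl Hr.
  - destruct p; simpl in Hl; [constructor|lia].
  - destruct (pdiv_ex r p) as [q [c [H1 [H2 H3]]]].
    inversion Hnd; subst.
    assert (Hc : c = 0).
    { specialize (Hr r (or_introl eq_refl)). rewrite H1 in Hr. lra. }
    apply H3; auto. apply IH; auto.
    + simpl in Hl. lia.
    + intros r' Hin. specialize (Hr r' (or_intror Hin)). rewrite H1, Hc in Hr.
      assert (r' <> r) by (intro; subst; contradiction).
      assert (r' - r <> 0) by lra.
      rewrite Rplus_0_r in Hr. apply Rmult_integral in Hr. destruct Hr; [contradiction|lra].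
Qed.

Lemma roots_bound p rs : NoDup rs -> (forall r, In r rs -> peval p r = 0) -> ~ zeroL p ->
  (length rs < length p)%nat.
Proof.
  intros. destruct (Nat.lt_ge_cases (length rs) (length p)); auto.
  exfalso; apply H1; eapply zero_poly; eauto.
Qed.



Ltac neqs := repeat split; try assumption;
  let E := fresh in intro E; apply Rminus_diag_uniq in E; subst;
  match goal with H : ~ _ |- False => solve [apply H; repeat (try (left; reflexivity); right)] end.

Ltac nodup_destr H := repeat (let Hn := fresh "Hn" in apply NoDup_cons_iff in H as [Hn H]; simpl in Hn).

Lemma lagr2 p g rs : length p = 3%nat -> length g = 1%nat -> length rs = 2%nat -> NoDup rs ->
  (forall r, In r rs -> peval p r = 0) ->
  sumR (map (fun r => peval g r / peval (pder p) r) rs) = 0.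
Proof.
  intros Hp Hg Hrs Hnd Hroot.
  destruct (Req_dec (last p 0) 0) as [Hz|Hnz].
  - assert (Hd : forall y, peval (pder p) y = 0).
    { intros y. apply pder_zero.
      destruct p as [|a0 [|a1 [|a2 [|]]]]; simpl in Hp; try discriminate.
      simpl in Hz; subst a2.
      assert (H : zeroL [a0;a1]).
      { apply (zero_poly rs); auto. rewrite Hrs; simpl; lia.
        intros r Hr. rewrite <- (Hroot r Hr). simpl; ring. }
      unfold zeroL in *. repeat (apply Forall_cons_iff in H as [? H]). subst.
      repeat constructor. }
    clear -Hd. induction rs as [|r rs IH]; simpl; auto. rewrite Hd, IH. unfold Rdiv; rewrite Rinv_0; ring.
  - destruct p as [|a0 [|a1 [|a2 [|]]]]; simpl in Hp; try discriminate.
    destruct g as [|b0 [|]]; simpl in Hg; try discriminate.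
    simpl in Hnz.
    set (c := plin rs).
    set (D := firstn 2 (padd [a0;a1;a2] (pscale (-a2) c))).
    assert (HD : zeroL D).
    { apply (zero_poly rs); auto. rewrite Hrs; subst D c;
      destruct rs as [|r1 [|r2 [|]]]; simpl in Hrs; try discriminate; reflexivity.
      intros r Hr. rewrite <- (Hroot r Hr). subst D c.
      destruct rs as [|r1 [|r2 [|]]]; simpl in Hrs; try discriminate.
      simpl in Hr. destruct Hr as [?|[?|[]]]; subst; simpl; ring. }
    destruct rs as [|r1 [|r2 [|]]]; simpl in Hrs; try discriminate.
    pose proof (pder_zero D) as HpD.
    assert (E1 : peval (pder [a0;a1;a2]) r1 = a2 * ((r1-r2)) + peval (pder D) r1) by (subst D c; simpl; ring).
    assert (E2 : peval (pder [a0;a1;a2]) r2 = a2 * ((r2-r1)) + peval (pder D) r2) by (subst D c; simpl; ring).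
    unfold sumR; cbn [map fold_right]. rewrite E1, E2, !(HpD _ HD).
    nodup_destr Hnd.
    simpl. field. neqs.
Qed.

Lemma lagr3 p g rs : length p = 4%nat -> length g = 2%nat -> length rs = 3%nat -> NoDup rs ->
  (forall r, In r rs -> peval p r = 0) ->
  sumR (map (fun r => peval g r / peval (pder p) r) rs) = 0.
Proof.
  intros Hp Hg Hrs Hnd Hroot.
  destruct (Req_dec (last p 0) 0) as [Hz|Hnz].
  - assert (Hd : forall y, peval (pder p) y = 0).
    { intros y. apply pder_zero.
      destruct p as [|a0 [|a1 [|a2 [|a3 [|]]]]]; simpl in Hp; try discriminate.
      simpl in Hz; subst a3.
      assert (H : zeroL [a0;a1;a2]).
      { apply (zero_poly rs); auto. rewrite Hrs; simpl; lia.
        intros r Hr. rewrite <- (Hroot r Hr). simpl; ring. }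
      unfold zeroL in *. repeat (apply Forall_cons_iff in H as [? H]). subst.
      repeat constructor. }
    clear -Hd. induction rs as [|r rs IH]; simpl; auto. rewrite Hd, IH. unfold Rdiv; rewrite Rinv_0; ring.
  - destruct p as [|a0 [|a1 [|a2 [|a3 [|]]]]]; simpl in Hp; try discriminate.
    destruct g as [|b0 [|b1 [|]]]; simpl in Hg; try discriminate.
    simpl in Hnz.
    set (c := plin rs).
    set (D := firstn 3 (padd [a0;a1;a2;a3] (pscale (-a3) c))).
    assert (HD : zeroL D).
    { apply (zero_poly rs); auto. rewrite Hrs; subst D c;
      destruct rs as [|r1 [|r2 [|r3 [|]]]]; simpl in Hrs; try discriminate; reflexivity.
      intros r Hr. rewrite <- (Hroot r Hr). subst D c.
      destruct rs as [|r1 [|r2 [|r3 [|]]]]; simpl in Hrs; try discriminate.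
      simpl in Hr. destruct Hr as [?|[?|[?|[]]]]; subst; simpl; ring. }
    destruct rs as [|r1 [|r2 [|r3 [|]]]]; simpl in Hrs; try discriminate.
    pose proof (pder_zero D) as HpD.
    assert (E1 : peval (pder [a0;a1;a2;a3]) r1 = a3 * ((r1-r2)*(r1-r3)) + peval (pder D) r1) by (subst D c; simpl; ring).
    assert (E2 : peval (pder [a0;a1;a2;a3]) r2 = a3 * ((r2-r1)*(r2-r3)) + peval (pder D) r2) by (subst D c; simpl; ring).
    assert (E3 : peval (pder [a0;a1;a2;a3]) r3 = a3 * ((r3-r1)*(r3-r2)) + peval (pder D) r3) by (subst D c; simpl; ring).
    unfold sumR; cbn [map fold_right]. rewrite E1, E2, E3, !(HpD _ HD).
    nodup_destr Hnd.
    simpl. field. neqs.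
Qed.

Lemma lagr4 p g rs : length p = 5%nat -> length g = 3%nat -> length rs = 4%nat -> NoDup rs ->
  (forall r, In r rs -> peval p r = 0) ->
  sumR (map (fun r => peval g r / peval (pder p) r) rs) = 0.
Proof.
  intros Hp Hg Hrs Hnd Hroot.
  destruct (Req_dec (last p 0) 0) as [Hz|Hnz].
  - assert (Hd : forall y, peval (pder p) y = 0).
    { intros y. apply pder_zero.
      destruct p as [|a0 [|a1 [|a2 [|a3 [|a4 [|]]]]]]; simpl in Hp; try discriminate.
      simpl in Hz; subst a4.
      assert (H : zeroL [a0;a1;a2;a3]).
      { apply (zero_poly rs); auto. rewrite Hrs; simpl; lia.
        intros r Hr. rewrite <- (Hroot r Hr). simpl; ring. }
      unfold zeroL in *. repeat (apply Forall_cons_iff in H as [? H]). subst.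
      repeat constructor. }
    clear -Hd. induction rs as [|r rs IH]; simpl; auto. rewrite Hd, IH. unfold Rdiv; rewrite Rinv_0; ring.
  - destruct p as [|a0 [|a1 [|a2 [|a3 [|a4 [|]]]]]]; simpl in Hp; try discriminate.
    destruct g as [|b0 [|b1 [|b2 [|]]]]; simpl in Hg; try discriminate.
    simpl in Hnz.
    set (c := plin rs).
    set (D := firstn 4 (padd [a0;a1;a2;a3;a4] (pscale (-a4) c))).
    assert (HD : zeroL D).
    { apply (zero_poly rs); auto. rewrite Hrs; subst D c;
      destruct rs as [|r1 [|r2 [|r3 [|r4 [|]]]]]; simpl in Hrs; try discriminate; reflexivity.
      intros r Hr. rewrite <- (Hroot r Hr). subst D c.
      destruct rs as [|r1 [|r2 [|r3 [|r4 [|]]]]]; simpl in Hrs; try discriminate.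
      simpl in Hr. destruct Hr as [?|[?|[?|[?|[]]]]]; subst; simpl; ring. }
    destruct rs as [|r1 [|r2 [|r3 [|r4 [|]]]]]; simpl in Hrs; try discriminate.
    pose proof (pder_zero D) as HpD.
    assert (E1 : peval (pder [a0;a1;a2;a3;a4]) r1 = a4 * ((r1-r2)*(r1-r3)*(r1-r4)) + peval (pder D) r1) by (subst D c; simpl; ring).
    assert (E2 : peval (pder [a0;a1;a2;a3;a4]) r2 = a4 * ((r2-r1)*(r2-r3)*(r2-r4)) + peval (pder D) r2) by (subst D c; simpl; ring).
    assert (E3 : peval (pder [a0;a1;a2;a3;a4]) r3 = a4 * ((r3-r1)*(r3-r2)*(r3-r4)) + peval (pder D) r3) by (subst D c; simpl; ring).
    assert (E4 : peval (pder [a0;a1;a2;a3;a4]) r4 = a4 * ((r4-r1)*(r4-r2)*(r4-r3)) + peval (pder D) r4) by (subst D c; simpl; ring).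
    unfold sumR; cbn [map fold_right]. rewrite E1, E2, E3, E4, !(HpD _ HD).
    nodup_destr Hnd.
    simpl. field. neqs.
Qed.

Lemma lagr5 p g rs : length p = 6%nat -> length g = 4%nat -> length rs = 5%nat -> NoDup rs ->
  (forall r, In r rs -> peval p r = 0) ->
  sumR (map (fun r => peval g r / peval (pder p) r) rs) = 0.
Proof.
  intros Hp Hg Hrs Hnd Hroot.
  destruct (Req_dec (last p 0) 0) as [Hz|Hnz].
  - assert (Hd : forall y, peval (pder p) y = 0).
    { intros y. apply pder_zero.
      destruct p as [|a0 [|a1 [|a2 [|a3 [|a4 [|a5 [|]]]]]]]; simpl in Hp; try discriminate.
      simpl in Hz; subst a5.
      assert (H : zeroL [a0;a1;a2;a3;a4]).
      { apply (zero_poly rs); auto. rewrite Hrs; simpl; lia.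
        intros r Hr. rewrite <- (Hroot r Hr). simpl; ring. }
      unfold zeroL in *. repeat (apply Forall_cons_iff in H as [? H]). subst.
      repeat constructor. }
    clear -Hd. induction rs as [|r rs IH]; simpl; auto. rewrite Hd, IH. unfold Rdiv; rewrite Rinv_0; ring.
  - destruct p as [|a0 [|a1 [|a2 [|a3 [|a4 [|a5 [|]]]]]]]; simpl in Hp; try discriminate.
    destruct g as [|b0 [|b1 [|b2 [|b3 [|]]]]]; simpl in Hg; try discriminate.
    simpl in Hnz.
    set (c := plin rs).
    set (D := firstn 5 (padd [a0;a1;a2;a3;a4;a5] (pscale (-a5) c))).
    assert (HD : zeroL D).
    { apply (zero_poly rs); auto. rewrite Hrs; subst D c;
      destruct rs as [|r1 [|r2 [|r3 [|r4 [|r5 [|]]]]]]; simpl in Hrs; try discriminate; reflexivity.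
      intros r Hr. rewrite <- (Hroot r Hr). subst D c.
      destruct rs as [|r1 [|r2 [|r3 [|r4 [|r5 [|]]]]]]; simpl in Hrs; try discriminate.
      simpl in Hr. destruct Hr as [?|[?|[?|[?|[?|[]]]]]]; subst; simpl; ring. }
    destruct rs as [|r1 [|r2 [|r3 [|r4 [|r5 [|]]]]]]; simpl in Hrs; try discriminate.
    pose proof (pder_zero D) as HpD.
    assert (E1 : peval (pder [a0;a1;a2;a3;a4;a5]) r1 = a5 * ((r1-r2)*(r1-r3)*(r1-r4)*(r1-r5)) + peval (pder D) r1) by (subst D c; simpl; ring).
    assert (E2 : peval (pder [a0;a1;a2;a3;a4;a5]) r2 = a5 * ((r2-r1)*(r2-r3)*(r2-r4)*(r2-r5)) + peval (pder D) r2) by (subst D c; simpl; ring).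
    assert (E3 : peval (pder [a0;a1;a2;a3;a4;a5]) r3 = a5 * ((r3-r1)*(r3-r2)*(r3-r4)*(r3-r5)) + peval (pder D) r3) by (subst D c; simpl; ring).
    assert (E4 : peval (pder [a0;a1;a2;a3;a4;a5]) r4 = a5 * ((r4-r1)*(r4-r2)*(r4-r3)*(r4-r5)) + peval (pder D) r4) by (subst D c; simpl; ring).
    assert (E5 : peval (pder [a0;a1;a2;a3;a4;a5]) r5 = a5 * ((r5-r1)*(r5-r2)*(r5-r3)*(r5-r4)) + peval (pder D) r5) by (subst D c; simpl; ring).
    unfold sumR; cbn [map fold_right]. rewrite E1, E2, E3, E4, E5, !(HpD _ HD).
    nodup_destr Hnd.
    simpl. field. neqs.
Qed.

Lemma lagr6 p g rs : length p = 7%nat -> length g = 5%nat -> length rs = 6%nat -> NoDup rs ->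
  (forall r, In r rs -> peval p r = 0) ->
  sumR (map (fun r => peval g r / peval (pder p) r) rs) = 0.
Proof.
  intros Hp Hg Hrs Hnd Hroot.
  destruct (Req_dec (last p 0) 0) as [Hz|Hnz].
  - assert (Hd : forall y, peval (pder p) y = 0).
    { intros y. apply pder_zero.
      destruct p as [|a0 [|a1 [|a2 [|a3 [|a4 [|a5 [|a6 [|]]]]]]]]; simpl in Hp; try discriminate.
      simpl in Hz; subst a6.
      assert (H : zeroL [a0;a1;a2;a3;a4;a5]).
      { apply (zero_poly rs); auto. rewrite Hrs; simpl; lia.
        intros r Hr. rewrite <- (Hroot r Hr). simpl; ring. }
      unfold zeroL in *. repeat (apply Forall_cons_iff in H as [? H]). subst.
      repeat constructor. }
    clear -Hd. induction rs as [|r rs IH]; simpl; auto. rewrite Hd, IH. unfold Rdiv; rewrite Rinv_0; ring.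
  - destruct p as [|a0 [|a1 [|a2 [|a3 [|a4 [|a5 [|a6 [|]]]]]]]]; simpl in Hp; try discriminate.
    destruct g as [|b0 [|b1 [|b2 [|b3 [|b4 [|]]]]]]; simpl in Hg; try discriminate.
    simpl in Hnz.
    set (c := plin rs).
    set (D := firstn 6 (padd [a0;a1;a2;a3;a4;a5;a6] (pscale (-a6) c))).
    assert (HD : zeroL D).
    { apply (zero_poly rs); auto. rewrite Hrs; subst D c;
      destruct rs as [|r1 [|r2 [|r3 [|r4 [|r5 [|r6 [|]]]]]]]; simpl in Hrs; try discriminate; reflexivity.
      intros r Hr. rewrite <- (Hroot r Hr). subst D c.
      destruct rs as [|r1 [|r2 [|r3 [|r4 [|r5 [|r6 [|]]]]]]]; simpl in Hrs; try discriminate.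
      simpl in Hr. destruct Hr as [?|[?|[?|[?|[?|[?|[]]]]]]]; subst; simpl; ring. }
    destruct rs as [|r1 [|r2 [|r3 [|r4 [|r5 [|r6 [|]]]]]]]; simpl in Hrs; try discriminate.
    pose proof (pder_zero D) as HpD.
    assert (E1 : peval (pder [a0;a1;a2;a3;a4;a5;a6]) r1 = a6 * ((r1-r2)*(r1-r3)*(r1-r4)*(r1-r5)*(r1-r6)) + peval (pder D) r1) by (subst D c; simpl; ring).
    assert (E2 : peval (pder [a0;a1;a2;a3;a4;a5;a6]) r2 = a6 * ((r2-r1)*(r2-r3)*(r2-r4)*(r2-r5)*(r2-r6)) + peval (pder D) r2) by (subst D c; simpl; ring).
    assert (E3 : peval (pder [a0;a1;a2;a3;a4;a5;a6]) r3 = a6 * ((r3-r1)*(r3-r2)*(r3-r4)*(r3-r5)*(r3-r6)) + peval (pder D) r3) by (subst D c; simpl; ring).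
    assert (E4 : peval (pder [a0;a1;a2;a3;a4;a5;a6]) r4 = a6 * ((r4-r1)*(r4-r2)*(r4-r3)*(r4-r5)*(r4-r6)) + peval (pder D) r4) by (subst D c; simpl; ring).
    assert (E5 : peval (pder [a0;a1;a2;a3;a4;a5;a6]) r5 = a6 * ((r5-r1)*(r5-r2)*(r5-r3)*(r5-r4)*(r5-r6)) + peval (pder D) r5) by (subst D c; simpl; ring).
    assert (E6 : peval (pder [a0;a1;a2;a3;a4;a5;a6]) r6 = a6 * ((r6-r1)*(r6-r2)*(r6-r3)*(r6-r4)*(r6-r5)) + peval (pder D) r6) by (subst D c; simpl; ring).
    unfold sumR; cbn [map fold_right]. rewrite E1, E2, E3, E4, E5, E6, !(HpD _ HD).
    nodup_destr Hnd.
    simpl. field. neqs.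
Qed.



Lemma lagr n p g rs : (2 <= n <= 6)%nat -> length p = S n -> length g = (n - 1)%nat -> length rs = n -> NoDup rs ->
  (forall r, In r rs -> peval p r = 0) ->
  sumR (map (fun r => peval g r / peval (pder p) r) rs) = 0.
Proof.
  intros Hn. destruct n as [|[|[|[|[|[|[|]]]]]]]; try lia; simpl; intros.
  - apply lagr2; auto. - apply lagr3; auto. - apply lagr4; auto. - apply lagr5; auto. - apply lagr6; auto.
Qed.

Lemma sum_ext {A} (f g : A -> R) l : (forall x, In x l -> f x = g x) -> sumR (map f l) = sumR (map g l).
Proof. induction l; simpl; intros; auto. rewrite H, IHl; auto. Qed.

Lemma sum_app l1 l2 : sumR (l1 ++ l2) = sumR l1 + sumR l2.
Proof. induction l1; simpl; [ring|rewrite IHl1; ring]. Qed.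

Lemma sum_filter {A} (f : A -> R) (b : A -> bool) l :
  sumR (map f l) = sumR (map f (filter b l)) + sumR (map f (filter (fun x => negb (b x)) l)).
Proof. induction l; simpl; [ring|]. destruct (b a); simpl; rewrite IHl; ring. Qed.

Lemma length_filter {A} (b : A -> bool) l :
  length l = (length (filter b l) + length (filter (fun x => negb (b x)) l))%nat.
Proof. induction l; simpl; auto. destruct (b a); simpl; lia. Qed.

Lemma sum_perm l l' : Permutation l l' -> sumR l = sumR l'.
Proof. induction 1; simpl; lra. Qed.

Lemma sum_opp {A} (f : A -> R) l : sumR (map (fun x => - f x) l) = - sumR (map f l).
Proof. induction l; simpl; [ring|rewrite IHl; ring]. Qed.

Lemma nodup_map_in {A B} (t : A -> B) l : NoDup l ->
  (forall p q, In p l -> In q l -> t p = t q -> p = q) -> NoDup (map t l).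
Proof.
  intros Hnd Hinj. apply NoDup_map_NoDup_ForallPairs; [|auto]. intros x y Hx Hy. apply Hinj; auto.

Qed.

Lemma gen_case (mag : R * R -> R) pts (t : R * R -> R) P g n :
  (2 <= n <= 6)%nat -> length pts = n -> length P = S n -> length g = (n - 1)%nat -> NoDup pts ->
  (forall p q, In p pts -> In q pts -> t p = t q -> p = q) ->
  (forall p, In p pts -> peval P (t p) = 0) ->
  (forall p, In p pts -> mag p = peval g (t p) / peval (pder P) (t p)) ->
  sumR (map mag pts) = 0.
Proof.
  intros Hn Hl HP Hg Hnd Hinj Hr Hm.
  rewrite (sum_ext _ _ _ Hm).
  rewrite <- (map_map t (fun r => peval g r / peval (pder P) r)).
  apply (lagr n); auto.
  - rewrite length_map; auto.
  - apply nodup_map_in; auto.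
  - intros r Hin. apply in_map_iff in Hin as [p [<- Hp]]. auto.
Qed.

Lemma branch_sum (mag : R * R -> R) A (t : R * R -> R) P g r0 n :
  (2 <= n <= 6)%nat -> S (length A) = n -> length P = S n -> length g = (n - 1)%nat -> NoDup A ->
  (forall p q, In p A -> In q A -> t p = t q -> p = q) ->
  (forall p, In p A -> peval P (t p) = 0) -> peval P r0 = 0 ->
  (forall p, In p A -> t p <> r0) ->
  (forall p, In p A -> mag p = peval g (t p) / peval (pder P) (t p)) ->
  sumR (map mag A) + peval g r0 / peval (pder P) r0 = 0.
Proof.
  intros Hn Hl HP Hg Hnd Hinj Hr Hr0 Hne Hm.
  rewrite (sum_ext _ _ _ Hm).
  rewrite <- (map_map t (fun r => peval g r / peval (pder P) r)).
  transitivity (sumR (map (fun r => peval g r / peval (pder P) r) (map t A ++ [r0]))).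
  { rewrite map_app, sum_app. simpl. ring. }
  apply (lagr n); auto.
  - rewrite length_app, length_map; simpl; lia.
  - apply NoDup_app; auto.
    + apply nodup_map_in; auto.
    + repeat constructor; simpl; auto.
    + intros x Hx Hx'. simpl in Hx'. destruct Hx' as [<-|[]].
      apply in_map_iff in Hx as [p [Hp1 Hp2]]. eapply Hne; eauto.
  - intros r Hin. apply in_app_or in Hin as [Hin|[<-|[]]]; auto.
    apply in_map_iff in Hin as [p [<- Hp]]. auto.
Qed.

Lemma invol (mag : R * R -> R) pts (sg : R * R -> R * R) :
  NoDup pts -> (forall p, In p pts -> In (sg p) pts) -> (forall p, sg (sg p) = p) ->
  (forall p, In p pts -> mag (sg p) = - mag p) -> sumR (map mag pts) = 0.
Proof.
  intros Hnd Hin Hsg Hm.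
  assert (Hp : Permutation (map sg pts) pts).
  { apply NoDup_Permutation_bis.
    - apply nodup_map_in; auto. intros p q _ _ E. rewrite <- (Hsg p), <- (Hsg q), E; auto.
    - rewrite length_map; auto.
    - intros x Hx. apply in_map_iff in Hx as [p [<- Hp]]. auto. }
  assert (E : sumR (map mag pts) = sumR (map mag (map sg pts))).
  { apply sum_perm. apply Permutation_map. symmetry; auto. }
  rewrite map_map in E. rewrite (sum_ext _ (fun x => - mag x) _ Hm) in E.
  rewrite sum_opp in E. lra.
Qed.

Lemma jac_nz fam c1 c2 c3 s p : ~ caustic fam c1 c2 c3 s -> fmap fam c1 c2 c3 p = s -> jacdet fam c1 c2 c3 p <> 0.
Proof. intros Hc Hf Hj. apply Hc. exists p; auto. Qed.

Ltac dsimp := match goal with |- context [Derive ?f ?x] =>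
   let H := fresh in  assert (H : is_derive f x _) by (auto_derive; [auto|reflexivity]);
   rewrite (is_derive_unique f x _ H); clear H end.

Lemma mag_eq J G D : J <> 0 -> G <> 0 -> D = G * J -> / J = G / D.
Proof. intros HJ HG ->. field. auto. Qed.


Definition isz (r : R) : bool := if Req_EM_T r 0 then true else false.
Lemma isz_iff r : isz r = true <-> r = 0.
Proof. unfold isz; destruct (Req_EM_T r 0); split; intros; auto; discriminate. Qed.
Lemma isz_f r : isz r = false <-> r <> 0.
Proof. unfold isz; destruct (Req_EM_T r 0); split; intros; auto; try discriminate; contradiction. Qed.

Lemma filter_bound (l : list (R*R)) (b : R*R -> bool) (t : R*R -> R) (P : list R) k :
  NoDup l -> (forall p q, In p l -> In q l -> b p = true -> b q = true -> t p = t q -> p = q) ->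
  (forall p, In p l -> b p = true -> peval P (t p) = 0) -> ~ zeroL P -> length P = S k ->
  (length (filter b l) <= k)%nat.
Proof.
  intros Hnd Hinj Hr Hz HP.
  assert (H : (length (map t (filter b l)) < length P)%nat).
  { apply roots_bound; auto.
    - apply nodup_map_in. apply NoDup_filter; auto.
      intros p q Hp Hq. apply filter_In in Hp, Hq. apply Hinj; tauto.
    - intros r Hin. apply in_map_iff in Hin as [p [<- Hp]]. apply filter_In in Hp. apply Hr; tauto. }
  rewrite length_map in H. lia.
Qed.

Lemma two_branch (mag : R*R -> R) pts (b : R*R -> bool) (t : R*R -> R) P g r0 n :
  (2 <= n <= 6)%nat -> NoDup pts -> length pts = S n -> length P = S n -> length g = (n - 1)%nat ->
  (length (filter b pts) <= n - 1)%nat -> (length (filter (fun x => negb (b x)) pts) <= 2)%nat ->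
  (forall p q, In p pts -> In q pts -> b p = true -> b q = true -> t p = t q -> p = q) ->
  (forall p, In p pts -> b p = true -> peval P (t p) = 0) -> peval P r0 = 0 ->
  (forall p, In p pts -> b p = true -> t p <> r0) ->
  (forall p, In p pts -> b p = true -> mag p = peval g (t p) / peval (pder P) (t p)) ->
  (forall p q, In p pts -> In q pts -> b p = false -> b q = false -> p <> q ->
     mag p + mag q = peval g r0 / peval (pder P) r0) ->
  sumR (map mag pts) = 0.
Proof.
  intros Hn Hnd Hl HP Hg HA HB Hinj Hr Hr0 Hne Hm HBs.
  pose proof (length_filter b pts) as Hlf.
  assert (HA' : length (filter b pts) = (n - 1)%nat) by lia.
  assert (HB' : length (filter (fun x => negb (b x)) pts) = 2%nat) by lia.
  rewrite (sum_filter _ b).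
  assert (NB : NoDup (filter (fun x => negb (b x)) pts)) by (apply NoDup_filter; auto).
  assert (EB : forall q, In q (filter (fun x => negb (b x)) pts) -> In q pts /\ b q = false).
  { intros q Hq. apply filter_In in Hq as [H1 H2]. split; auto. destruct (b q); auto; discriminate. }
  destruct (filter (fun x => negb (b x)) pts) as [|q1 [|q2 [|]]] eqn:Eq; simpl in HB'; try discriminate.
  simpl. rewrite Rplus_0_r.
  destruct (EB q1) as [Hq1 Hb1]; [simpl; auto|]. destruct (EB q2) as [Hq2 Hb2]; [simpl; auto|].
  assert (q1 <> q2). { inversion NB; subst. intro; subst. simpl in *. tauto. }
  rewrite (HBs q1 q2); auto.
  apply (branch_sum mag (filter b pts) t P g r0 n); auto; try lia.
  - apply NoDup_filter; auto.
  - intros p q Hp Hq. apply filter_In in Hp, Hq. apply Hinj; tauto.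
  - intros p Hp. apply filter_In in Hp. apply Hr; tauto.
  - intros p Hp. apply filter_In in Hp. apply Hne; tauto.
  - intros p Hp. apply filter_In in Hp. apply Hm; tauto.
Qed.


Ltac getpt Hpre p H1 H2 :=
  let Hf := fresh in
  match goal with Hin : In p _ |- _ => pose proof (proj2 (Hpre p) Hin) as Hf end;
  unfold fmap in Hf; simpl in Hf; injection Hf as H1 H2.

Lemma jac_cusp c1 c2 c3 x y : jacdet Cusp c1 c2 c3 (x,y) = x + 3*y^2.
Proof. unfold jacdet, fmap1, fmap2; simpl; repeat dsimp; ring. Qed.

Lemma fam_cusp c1 c2 c3 s1 s2 pts : ~ caustic Cusp c1 c2 c3 (s1,s2) -> NoDup pts -> length pts = 3%nat ->
  (forall p, fmap Cusp c1 c2 c3 p = (s1,s2) <-> In p pts) ->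
  sumR (map (magnification Cusp c1 c2 c3) pts) = 0.
Proof.
  intros Hc Hnd Hl Hpre.
  apply (gen_case _ pts (fun p => snd p) [-s2; s1; 0; 1] [1; 0] 3); auto.
  - intros [x y] [x' y'] Hp Hq E; simpl in E; subst.
    getpt Hpre (x,y') H1 H2. getpt Hpre (x',y') H3 H4. subst; auto.
  - intros [x y] Hp. getpt Hpre (x,y) H1 H2. simpl. subst. lra.
  - intros [x y] Hp. pose proof (jac_nz _ _ _ _ _ _ Hc (proj2 (Hpre _) Hp)) as Hj.
    getpt Hpre (x,y) H1 H2. unfold magnification. rewrite jac_cusp in *.
    apply mag_eq; auto; [simpl; lra|]. subst. simpl. ring.
Qed.



Lemma jac_swallow c1 c2 c3 x y : jacdet Swallowtail c1 c2 c3 (x,y) = y + 2*c1*x + 4*x^3.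
Proof. unfold jacdet, fmap1, fmap2; simpl; repeat dsimp; ring. Qed.

Lemma fam_swallow c1 c2 c3 s1 s2 pts : ~ caustic Swallowtail c1 c2 c3 (s1,s2) -> NoDup pts -> length pts = 4%nat ->
  (forall p, fmap Swallowtail c1 c2 c3 p = (s1,s2) <-> In p pts) ->
  sumR (map (magnification Swallowtail c1 c2 c3) pts) = 0.
Proof.
  intros Hc Hnd Hl Hpre.
  apply (gen_case _ pts (fun p => fst p) [-s1; s2; c1; 0; 1] [1; 0; 0] 4); try (simpl; lia); auto.
  - intros [x y] [x' y'] Hp Hq E; simpl in E; subst.
    getpt Hpre (x',y) H1 H2. getpt Hpre (x',y') H3 H4. subst; auto.
  - intros [x y] Hp. getpt Hpre (x,y) H1 H2. simpl. subst. ring.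
  - intros [x y] Hp. pose proof (jac_nz _ _ _ _ _ _ Hc (proj2 (Hpre _) Hp)) as Hj.
    getpt Hpre (x,y) H1 H2. unfold magnification. rewrite jac_swallow in *.
    apply mag_eq; auto; [simpl; lra|]. subst. simpl. ring.
Qed.

Lemma jac_butter c1 c2 c3 x y : jacdet Butterfly c1 c2 c3 (x,y) = -2*y - 6*c2*x - 12*c1*x^2 - 30*x^4.
Proof. unfold jacdet, fmap1, fmap2; simpl; repeat dsimp; ring. Qed.

Lemma fam_butter c1 c2 c3 s1 s2 pts : ~ caustic Butterfly c1 c2 c3 (s1,s2) -> NoDup pts -> length pts = 5%nat ->
  (forall p, fmap Butterfly c1 c2 c3 p = (s1,s2) <-> In p pts) ->
  sumR (map (magnification Butterfly c1 c2 c3) pts) = 0.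
Proof.
  intros Hc Hnd Hl Hpre.
  apply (gen_case _ pts (fun p => fst p) [-s1; -2*s2; -3*c2; -4*c1; 0; -6] [1; 0; 0; 0] 5); try (simpl; lia); auto.
  - intros [x y] [x' y'] Hp Hq E; simpl in E; subst.
    getpt Hpre (x',y) H1 H2. getpt Hpre (x',y') H3 H4. subst; auto.
  - intros [x y] Hp. getpt Hpre (x,y) H1 H2. simpl. subst. ring.
  - intros [x y] Hp. pose proof (jac_nz _ _ _ _ _ _ Hc (proj2 (Hpre _) Hp)) as Hj.
    getpt Hpre (x,y) H1 H2. unfold magnification. rewrite jac_butter in *.
    apply mag_eq; auto; [simpl; lra|]. subst. simpl. ring.
Qed.

Lemma jac_wig c1 c2 c3 x y : jacdet Wigwam c1 c2 c3 (x,y) = -2*y - 6*c3*x - 12*c2*x^2 - 20*c1*x^3 - 42*x^5.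
Proof. unfold jacdet, fmap1, fmap2; simpl; repeat dsimp; ring. Qed.

Lemma fam_wig c1 c2 c3 s1 s2 pts : ~ caustic Wigwam c1 c2 c3 (s1,s2) -> NoDup pts -> length pts = 6%nat ->
  (forall p, fmap Wigwam c1 c2 c3 p = (s1,s2) <-> In p pts) ->
  sumR (map (magnification Wigwam c1 c2 c3) pts) = 0.
Proof.
  intros Hc Hnd Hl Hpre.
  apply (gen_case _ pts (fun p => fst p) [-s1; -2*s2; -3*c3; -4*c2; -5*c1; 0; -7] [1; 0; 0; 0; 0] 6); try (simpl; lia); auto.
  - intros [x y] [x' y'] Hp Hq E; simpl in E; subst.
    getpt Hpre (x',y) H1 H2. getpt Hpre (x',y') H3 H4. subst; auto.
  - intros [x y] Hp. getpt Hpre (x,y) H1 H2. simpl. subst. ring.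
  - intros [x y] Hp. pose proof (jac_nz _ _ _ _ _ _ Hc (proj2 (Hpre _) Hp)) as Hj.
    getpt Hpre (x,y) H1 H2. unfold magnification. rewrite jac_wig in *.
    apply mag_eq; auto; [simpl; lra|]. subst. simpl. ring.
Qed.


Lemma jac_fold c1 c2 c3 x y : jacdet Fold c1 c2 c3 (x,y) = 2*y.
Proof. unfold jacdet, fmap1, fmap2; simpl; repeat dsimp; ring. Qed.

Lemma fam_fold c1 c2 c3 s1 s2 pts : ~ caustic Fold c1 c2 c3 (s1,s2) -> NoDup pts ->
  (forall p, fmap Fold c1 c2 c3 p = (s1,s2) <-> In p pts) ->
  sumR (map (magnification Fold c1 c2 c3) pts) = 0.
Proof.
  intros Hc Hnd Hpre.
  apply (invol _ pts (fun p => (fst p, - snd p))); auto.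
  - intros [x y] Hp. apply Hpre. rewrite <- (proj2 (Hpre _) Hp). unfold fmap; simpl. f_equal; ring.
  - intros [x y]; simpl; f_equal; ring.
  - intros [x y] Hp. unfold magnification. simpl. rewrite !jac_fold.
    pose proof (jac_nz _ _ _ _ _ _ Hc (proj2 (Hpre _) Hp)) as Hj. rewrite jac_fold in Hj.
    field. intro; apply Hj; lra.
Qed.

Lemma jac_hyp c1 c2 c3 x y : jacdet HyperbolicUmbilic c1 c2 c3 (x,y) = 36*x*y - c1^2.
Proof. unfold jacdet, fmap1, fmap2; simpl; repeat dsimp; ring. Qed.

Lemma fam_hyp c1 c2 c3 s1 s2 pts : ~ caustic HyperbolicUmbilic c1 c2 c3 (s1,s2) -> NoDup pts -> length pts = 4%nat ->
  (forall p, fmap HyperbolicUmbilic c1 c2 c3 p = (s1,s2) <-> In p pts) ->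
  sumR (map (magnification HyperbolicUmbilic c1 c2 c3) pts) = 0.
Proof.
  intros Hc Hnd Hl Hpre.
  destruct (Req_dec c1 0) as [Hc0|Hc0].
  - subst c1. apply (invol _ pts (fun p => (- fst p, snd p))); auto.
    + intros [x y] Hp. apply Hpre. rewrite <- (proj2 (Hpre _) Hp). unfold fmap; simpl. f_equal; ring.
    + intros [x y]; simpl; f_equal; ring.
    + intros [x y] Hp. unfold magnification. simpl. rewrite !jac_hyp.
      pose proof (jac_nz _ _ _ _ _ _ Hc (proj2 (Hpre _) Hp)) as Hj. rewrite jac_hyp in Hj.
      field. split; intro E; apply Hj; rewrite E; ring.
  - apply (gen_case _ pts (fun p => fst p) [3*s1^2 + c1^2*s2; c1^3; 18*s1; 0; 27] [-c1; 0; 0] 4);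
      try (simpl; lia); auto.
    + intros [x y] [x' y'] Hp Hq E; simpl in E; subst.
      getpt Hpre (x',y) H1 H2. getpt Hpre (x',y') H3 H4.
      assert (y = y') by (apply (Rmult_eq_reg_l c1); auto; lra). subst; auto.
    + intros [x y] Hp. getpt Hpre (x,y) H1 H2. simpl. subst. ring.
    + intros [x y] Hp. pose proof (jac_nz _ _ _ _ _ _ Hc (proj2 (Hpre _) Hp)) as Hj.
      getpt Hpre (x,y) H1 H2. unfold magnification. rewrite jac_hyp in *.
      apply mag_eq; auto; [simpl; intro; apply Hc0; lra|]. subst. simpl. ring.
Qed.


Lemma sq_neg a b : a * a = b * b -> a <> b -> b = - a.
Proof.
  intros H Hn. assert ((a - b) * (a + b) = 0) by (ring_simplify; lra).
  apply Rmult_integral in H0; destruct H0; [exfalso; apply Hn; lra|lra].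
Qed.

Lemma jac_ell c1 c2 c3 x y : jacdet EllipticUmbilic c1 c2 c3 (x,y) = (-6*x - 2*c1)*(6*x - 2*c1) - 36*y^2.
Proof. unfold jacdet, fmap1, fmap2; simpl; repeat dsimp; ring. Qed.

Lemma fam_ell c1 c2 c3 s1 s2 pts : ~ caustic EllipticUmbilic c1 c2 c3 (s1,s2) -> NoDup pts -> length pts = 4%nat ->
  (forall p, fmap EllipticUmbilic c1 c2 c3 p = (s1,s2) <-> In p pts) ->
  sumR (map (magnification EllipticUmbilic c1 c2 c3) pts) = 0.
Proof.
  intros Hc Hnd Hl Hpre.
  destruct (Req_dec s2 0) as [Hs|Hs].
  - subst s2.
    assert (Hx : forall x y, In (x,y) pts -> y <> 0 -> x = c1/3).
    { intros x y Hp Hy. getpt Hpre (x,y) H1 H2.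
      assert (y * (3*x - c1) = 0) by lra. apply Rmult_integral in H; destruct H; [contradiction|field_simplify; lra]. }
    apply (two_branch _ pts (fun p => isz (snd p)) (fun p => fst p)
             (pmul [-c1; 3] [s1; 2*c1; 3]) [-1/2; 0] (c1/3) 3); try (simpl; lia); auto.
    + apply (filter_bound _ _ (fun p => fst p) [s1; 2*c1; 3]); auto.
      * intros [x y] [x' y'] Hp Hq Hb1 Hb2 E. apply isz_iff in Hb1, Hb2. simpl in *. subst; auto.
      * intros [x y] Hp Hb. apply isz_iff in Hb. simpl in Hb. subst. getpt Hpre (x,0) H1 H2. simpl. subst; ring.
      * intro Hz. unfold zeroL in Hz. repeat (apply Forall_cons_iff in Hz as [? Hz]). lra.
    + apply (filter_bound _ _ (fun p => snd p) [-(s1 + c1^2); 0; 3]); auto.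
      * intros [x y] [x' y'] Hp Hq Hb1 Hb2 E. simpl in *.
        apply Bool.negb_true_iff, isz_f in Hb1, Hb2. simpl in *. subst.
        rewrite (Hx x y' Hp Hb1), (Hx x' y' Hq Hb2); auto.
      * intros [x y] Hp Hb. apply Bool.negb_true_iff, isz_f in Hb. simpl in Hb.
        pose proof (Hx x y Hp Hb). getpt Hpre (x,y) H1 H2. simpl. subst. field.
      * intro Hz. unfold zeroL in Hz. repeat (apply Forall_cons_iff in Hz as [? Hz]). lra.
    + intros [x y] [x' y'] Hp Hq Hb1 Hb2 E. apply isz_iff in Hb1, Hb2. simpl in *. subst; auto.
    + intros [x y] Hp Hb. apply isz_iff in Hb. simpl in Hb. subst. getpt Hpre (x,0) H1 H2. simpl. subst; ring.
    + simpl. field.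
    + intros [x y] Hp Hb E. apply isz_iff in Hb. simpl in Hb, E. subst.
      apply (jac_nz _ _ _ _ _ (c1/3,0) Hc (proj2 (Hpre _) Hp)). rewrite jac_ell. field.
    + intros [x y] Hp Hb. apply isz_iff in Hb. simpl in Hb. subst.
      pose proof (jac_nz _ _ _ _ _ _ Hc (proj2 (Hpre _) Hp)) as Hj.
      getpt Hpre (x,0) H1 H2. unfold magnification. rewrite jac_ell in *.
      apply mag_eq; auto; [simpl; lra|]. subst. simpl. field.
    + intros [x y] [x' y'] Hp Hq Hb1 Hb2 Hne.
      apply isz_f in Hb1, Hb2. simpl in Hb1, Hb2.
      pose proof (Hx x y Hp Hb1); pose proof (Hx x' y' Hq Hb2). subst x x'.
      pose proof (jac_nz _ _ _ _ _ _ Hc (proj2 (Hpre _) Hp)) as Hj.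
      getpt Hpre (c1/3,y) H1 H2. getpt Hpre (c1/3,y') H3 H4.
      assert (y' = - y). { apply sq_neg. lra. intro; subst; auto. }
      subst y'. unfold magnification.
      assert (E1 : forall z, jacdet EllipticUmbilic c1 c2 c3 (c1/3, z) = -36*z^2) by (intro; rewrite jac_ell; field).
      assert (EP : peval (pder (pmul [-c1; 3] [s1; 2*c1; 3])) (c1/3) = 9*y^2) by (simpl; subst s1; field).
      rewrite !E1, EP. simpl. field. auto.
  - apply (gen_case _ pts (fun p => fst p)
      (padd [3*s2^2/4] (pscale (-1) (pmul [s1; 2*c1; 3] (pmul [-c1;3] [-c1;3])))) [-c1/2; 3/2; 0] 4);
      try (simpl; lia); auto.
    + intros [x y] [x' y'] Hp Hq E; simpl in E; subst x'.
      getpt Hpre (x,y) H1 H2. getpt Hpre (x,y') H3 H4.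
      assert (Hk : 3*x - c1 <> 0).
      { intro Hk; apply Hs; rewrite <- H2; replace (6*x*y-2*c1*y) with (2*y*(3*x-c1)) by ring; rewrite Hk; ring. }
      assert (y = y').
      { apply (Rmult_eq_reg_l (2*(3*x-c1))); [|intro; apply Hk; lra].
        transitivity s2; [rewrite <- H2|rewrite <- H4]; ring. }
      subst; auto.
    + intros [x y] Hp. getpt Hpre (x,y) H1 H2. simpl. subst. field.
    + intros [x y] Hp. pose proof (jac_nz _ _ _ _ _ _ Hc (proj2 (Hpre _) Hp)) as Hj.
      getpt Hpre (x,y) H1 H2. unfold magnification. rewrite jac_ell in *.
      apply mag_eq; auto.
      * simpl; intro Hg; apply Hs; rewrite <- H2.
        replace (6*x*y-2*c1*y) with (4*y*(-c1/2 + x*(3/2+x*(0+x*0)))) by field; rewrite Hg; ring.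
      * subst. simpl. field.
Qed.


Lemma jac_par c1 c2 c3 x y : jacdet ParabolicUmbilic c1 c2 c3 (x,y) = (2*c1+2*y)*(2*c2+12*y^2) - 4*x^2.
Proof. unfold jacdet, fmap1, fmap2; simpl; repeat dsimp; ring. Qed.

Lemma fam_par c1 c2 c3 s1 s2 pts : ~ caustic ParabolicUmbilic c1 c2 c3 (s1,s2) -> NoDup pts -> length pts = 5%nat ->
  (forall p, fmap ParabolicUmbilic c1 c2 c3 p = (s1,s2) <-> In p pts) ->
  sumR (map (magnification ParabolicUmbilic c1 c2 c3) pts) = 0.
Proof.
  intros Hc Hnd Hl Hpre.
  destruct (Req_dec s1 0) as [Hs|Hs].
  - subst s1.
    assert (Hy : forall x y, In (x,y) pts -> x <> 0 -> y = - c1).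
    { intros x y Hp Hx. getpt Hpre (x,y) H1 H2.
      assert (x * (c1 + y) = 0) by lra. apply Rmult_integral in H; destruct H; [contradiction|lra]. }
    apply (two_branch _ pts (fun p => isz (fst p)) (fun p => snd p)
             (pmul [c1; 1] [-s2; 2*c2; 0; 4]) [1/2; 0; 0] (-c1) 4); try (simpl; lia); auto.
    + apply (filter_bound _ _ (fun p => snd p) [-s2; 2*c2; 0; 4]); auto.
      * intros [x y] [x' y'] Hp Hq Hb1 Hb2 E. apply isz_iff in Hb1, Hb2. simpl in *. subst; auto.
      * intros [x y] Hp Hb. apply isz_iff in Hb. simpl in Hb. subst. getpt Hpre (0,y) H1 H2. simpl. subst; ring.
      * intro Hz. unfold zeroL in Hz. repeat (apply Forall_cons_iff in Hz as [? Hz]). lra.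
    + apply (filter_bound _ _ (fun p => fst p) [-(s2 + 2*c1*c2 + 4*c1^3); 0; 1]); auto.
      * intros [x y] [x' y'] Hp Hq Hb1 Hb2 E. simpl in *.
        apply Bool.negb_true_iff, isz_f in Hb1, Hb2. simpl in *. subst.
        rewrite (Hy x' y Hp Hb1), (Hy x' y' Hq Hb2); auto.
      * intros [x y] Hp Hb. apply Bool.negb_true_iff, isz_f in Hb. simpl in Hb.
        pose proof (Hy x y Hp Hb). getpt Hpre (x,y) H1 H2. simpl. subst. ring.
      * intro Hz. unfold zeroL in Hz. repeat (apply Forall_cons_iff in Hz as [? Hz]). lra.
    + intros [x y] [x' y'] Hp Hq Hb1 Hb2 E. apply isz_iff in Hb1, Hb2. simpl in *. subst; auto.
    + intros [x y] Hp Hb. apply isz_iff in Hb. simpl in Hb. subst. getpt Hpre (0,y) H1 H2. simpl. subst; ring.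
    + simpl. ring.
    + intros [x y] Hp Hb E. apply isz_iff in Hb. simpl in Hb, E. subst.
      apply (jac_nz _ _ _ _ _ (0,-c1) Hc (proj2 (Hpre _) Hp)). rewrite jac_par. ring.
    + intros [x y] Hp Hb. apply isz_iff in Hb. simpl in Hb. subst.
      pose proof (jac_nz _ _ _ _ _ _ Hc (proj2 (Hpre _) Hp)) as Hj.
      getpt Hpre (0,y) H1 H2. unfold magnification. rewrite jac_par in *.
      apply mag_eq; auto; [simpl; lra|]. subst. simpl. field.
    + intros [x y] [x' y'] Hp Hq Hb1 Hb2 Hne.
      apply isz_f in Hb1, Hb2. simpl in Hb1, Hb2.
      pose proof (Hy x y Hp Hb1); pose proof (Hy x' y' Hq Hb2). subst y y'.
      pose proof (jac_nz _ _ _ _ _ _ Hc (proj2 (Hpre _) Hp)) as Hj.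
      getpt Hpre (x,-c1) H1 H2. getpt Hpre (x',-c1) H3 H4.
      assert (x' = - x). { apply sq_neg. lra. intro; subst; auto. }
      subst x'. unfold magnification.
      assert (E1 : forall z, jacdet ParabolicUmbilic c1 c2 c3 (z, -c1) = -4*z^2) by (intro; rewrite jac_par; ring).
      assert (EP : peval (pder (pmul [c1; 1] [-s2; 2*c2; 0; 4])) (-c1) = -x^2) by (simpl; subst s2; ring).
      rewrite !E1, EP. simpl. field. auto.
  - apply (gen_case _ pts (fun p => snd p)
      (padd [s1^2] (pscale (-4) (pmul (pmul [c1;1] [c1;1]) [s2; -2*c2; 0; -4]))) [2*c1; 2; 0; 0] 5);
      try (simpl; lia); auto.
    + intros [x y] [x' y'] Hp Hq E; simpl in E; subst y'.
      getpt Hpre (x,y) H1 H2. getpt Hpre (x',y) H3 H4.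
      assert (Hk : c1 + y <> 0).
      { intro Hk; apply Hs; rewrite <- H1; replace (2*c1*x+2*x*y) with (2*x*(c1+y)) by ring; rewrite Hk; ring. }
      assert (x = x').
      { apply (Rmult_eq_reg_l (2*(c1+y))); [|intro; apply Hk; lra].
        transitivity s1; [rewrite <- H1|rewrite <- H3]; ring. }
      subst; auto.
    + intros [x y] Hp. getpt Hpre (x,y) H1 H2. simpl. subst. ring.
    + intros [x y] Hp. pose proof (jac_nz _ _ _ _ _ _ Hc (proj2 (Hpre _) Hp)) as Hj.
      getpt Hpre (x,y) H1 H2. unfold magnification. rewrite jac_par in *.
      apply mag_eq; auto.
      * simpl; intro Hg; apply Hs; rewrite <- H1.
        replace (2*c1*x+2*x*y) with (x*(2*c1 + y*(2+y*(0+y*(0+y*0))))) by ring; rewrite Hg; ring.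
      * subst. simpl. ring.
Qed.


Lemma jac_EllipticUmbilic2 c1 c2 c3 x y : jacdet EllipticUmbilic2 c1 c2 c3 (x,y) = -2*y*(4*(5)*y^3 - 12*c1*y^2 - 6*c2*y - 2*c3) - 4*x^2.
Proof. unfold jacdet, fmap1, fmap2; simpl; repeat dsimp; ring. Qed.

Lemma fam_EllipticUmbilic2 c1 c2 c3 s1 s2 pts : ~ caustic EllipticUmbilic2 c1 c2 c3 (s1,s2) -> NoDup pts -> length pts = 6%nat ->
  (forall p, fmap EllipticUmbilic2 c1 c2 c3 p = (s1,s2) <-> In p pts) ->
  sumR (map (magnification EllipticUmbilic2 c1 c2 c3) pts) = 0.
Proof.
  intros Hc Hnd Hl Hpre.
  destruct (Req_dec s1 0) as [Hs|Hs].
  - subst s1.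
    assert (Hy : forall x y, In (x,y) pts -> x <> 0 -> y = 0).
    { intros x y Hp Hx. getpt Hpre (x,y) H1 H2.
      assert (x * y = 0) by lra. apply Rmult_integral in H; destruct H; [contradiction|lra]. }
    apply (two_branch _ pts (fun p => isz (fst p)) (fun p => snd p)
             (pmul [0; 1] [-s2; -2*c3; -3*c2; -4*c1; 5]) [-1/2; 0; 0; 0] 0 5); try (simpl; lia); auto.
    + apply (filter_bound _ _ (fun p => snd p) [-s2; -2*c3; -3*c2; -4*c1; 5]); auto.
      * intros [x y] [x' y'] Hp Hq Hb1 Hb2 E. apply isz_iff in Hb1, Hb2. simpl in *. subst; auto.
      * intros [x y] Hp Hb. apply isz_iff in Hb. simpl in Hb. subst. getpt Hpre (0,y) H1 H2. simpl. subst; ring.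
      * intro Hz. unfold zeroL in Hz. repeat (apply Forall_cons_iff in Hz as [? Hz]). lra.
    + apply (filter_bound _ _ (fun p => fst p) [s2; 0; 1]); auto.
      * intros [x y] [x' y'] Hp Hq Hb1 Hb2 E. simpl in *.
        apply Bool.negb_true_iff, isz_f in Hb1, Hb2. simpl in *. subst.
        rewrite (Hy x' y Hp Hb1), (Hy x' y' Hq Hb2); auto.
      * intros [x y] Hp Hb. apply Bool.negb_true_iff, isz_f in Hb. simpl in Hb.
        pose proof (Hy x y Hp Hb). getpt Hpre (x,y) H1 H2. simpl. subst. ring.
      * intro Hz. unfold zeroL in Hz. repeat (apply Forall_cons_iff in Hz as [? Hz]). lra.
    + intros [x y] [x' y'] Hp Hq Hb1 Hb2 E. apply isz_iff in Hb1, Hb2. simpl in *. subst; auto.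
    + intros [x y] Hp Hb. apply isz_iff in Hb. simpl in Hb. subst. getpt Hpre (0,y) H1 H2. simpl. subst; ring.
    + simpl. ring.
    + intros [x y] Hp Hb E. apply isz_iff in Hb. simpl in Hb, E. subst.
      apply (jac_nz _ _ _ _ _ (0,0) Hc (proj2 (Hpre _) Hp)). rewrite jac_EllipticUmbilic2. ring.
    + intros [x y] Hp Hb. apply isz_iff in Hb. simpl in Hb. subst.
      pose proof (jac_nz _ _ _ _ _ _ Hc (proj2 (Hpre _) Hp)) as Hj.
      getpt Hpre (0,y) H1 H2. unfold magnification. rewrite jac_EllipticUmbilic2 in *.
      apply mag_eq; auto; [simpl; lra|]. subst. simpl. field.
    + intros [x y] [x' y'] Hp Hq Hb1 Hb2 Hne.
      apply isz_f in Hb1, Hb2. simpl in Hb1, Hb2.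
      pose proof (Hy x y Hp Hb1); pose proof (Hy x' y' Hq Hb2). subst y y'.
      pose proof (jac_nz _ _ _ _ _ _ Hc (proj2 (Hpre _) Hp)) as Hj.
      getpt Hpre (x,0) H1 H2. getpt Hpre (x',0) H3 H4.
      assert (x' = - x). { apply sq_neg. lra. intro; subst; auto. }
      subst x'. unfold magnification.
      assert (E1 : forall z, jacdet EllipticUmbilic2 c1 c2 c3 (z, 0) = -4*z^2) by (intro; rewrite jac_EllipticUmbilic2; ring).
      assert (EP : peval (pder (pmul [0; 1] [-s2; -2*c3; -3*c2; -4*c1; 5])) 0 = x^2) by (simpl; subst s2; ring).
      rewrite !E1, EP. simpl. field. intro; subst; apply Hj; rewrite jac_EllipticUmbilic2; ring.
  - apply (gen_case _ pts (fun p => snd p)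
      (padd [-s1^2/4] (pmul [0;0;1] [-s2; -2*c3; -3*c2; -4*c1; 5])) [0; -1/2; 0; 0; 0] 6);
      try (simpl; lia); auto.
    + intros [x y] [x' y'] Hp Hq E; simpl in E; subst y'.
      getpt Hpre (x,y) H1 H2. getpt Hpre (x',y) H3 H4.
      assert (Hk : y <> 0).
      { intro Hk; apply Hs; rewrite <- H1; rewrite Hk; ring. }
      assert (x = x').
      { apply (Rmult_eq_reg_l (-2*y)); [|intro; apply Hk; lra].
        transitivity s1; [rewrite <- H1|rewrite <- H3]; ring. }
      subst; auto.
    + intros [x y] Hp. getpt Hpre (x,y) H1 H2. simpl. subst. field.
    + intros [x y] Hp. pose proof (jac_nz _ _ _ _ _ _ Hc (proj2 (Hpre _) Hp)) as Hj.
      getpt Hpre (x,y) H1 H2. unfold magnification. rewrite jac_EllipticUmbilic2 in *.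
      apply mag_eq; auto.
      * simpl; intro Hg; apply Hs; rewrite <- H1.
        replace (-2*x*y) with (4*x*(0 + y*(-1/2 + y*(0+y*(0+y*(0+y*0)))))) by field; rewrite Hg; ring.
      * subst. simpl. field.
Qed.

Lemma jac_HyperbolicUmbilic2 c1 c2 c3 x y : jacdet HyperbolicUmbilic2 c1 c2 c3 (x,y) = -2*y*(4*(-5)*y^3 - 12*c1*y^2 - 6*c2*y - 2*c3) - 4*x^2.
Proof. unfold jacdet, fmap1, fmap2; simpl; repeat dsimp; ring. Qed.

Lemma fam_HyperbolicUmbilic2 c1 c2 c3 s1 s2 pts : ~ caustic HyperbolicUmbilic2 c1 c2 c3 (s1,s2) -> NoDup pts -> length pts = 6%nat ->
  (forall p, fmap HyperbolicUmbilic2 c1 c2 c3 p = (s1,s2) <-> In p pts) ->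
  sumR (map (magnification HyperbolicUmbilic2 c1 c2 c3) pts) = 0.
Proof.
  intros Hc Hnd Hl Hpre.
  destruct (Req_dec s1 0) as [Hs|Hs].
  - subst s1.
    assert (Hy : forall x y, In (x,y) pts -> x <> 0 -> y = 0).
    { intros x y Hp Hx. getpt Hpre (x,y) H1 H2.
      assert (x * y = 0) by lra. apply Rmult_integral in H; destruct H; [contradiction|lra]. }
    apply (two_branch _ pts (fun p => isz (fst p)) (fun p => snd p)
             (pmul [0; 1] [-s2; -2*c3; -3*c2; -4*c1; -5]) [-1/2; 0; 0; 0] 0 5); try (simpl; lia); auto.
    + apply (filter_bound _ _ (fun p => snd p) [-s2; -2*c3; -3*c2; -4*c1; -5]); auto.
      * intros [x y] [x' y'] Hp Hq Hb1 Hb2 E. apply isz_iff in Hb1, Hb2. simpl in *. subst; auto.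
      * intros [x y] Hp Hb. apply isz_iff in Hb. simpl in Hb. subst. getpt Hpre (0,y) H1 H2. simpl. subst; ring.
      * intro Hz. unfold zeroL in Hz. repeat (apply Forall_cons_iff in Hz as [? Hz]). lra.
    + apply (filter_bound _ _ (fun p => fst p) [s2; 0; 1]); auto.
      * intros [x y] [x' y'] Hp Hq Hb1 Hb2 E. simpl in *.
        apply Bool.negb_true_iff, isz_f in Hb1, Hb2. simpl in *. subst.
        rewrite (Hy x' y Hp Hb1), (Hy x' y' Hq Hb2); auto.
      * intros [x y] Hp Hb. apply Bool.negb_true_iff, isz_f in Hb. simpl in Hb.
        pose proof (Hy x y Hp Hb). getpt Hpre (x,y) H1 H2. simpl. subst. ring.
      * intro Hz. unfold zeroL in Hz. repeat (apply Forall_cons_iff in Hz as [? Hz]). lra.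
    + intros [x y] [x' y'] Hp Hq Hb1 Hb2 E. apply isz_iff in Hb1, Hb2. simpl in *. subst; auto.
    + intros [x y] Hp Hb. apply isz_iff in Hb. simpl in Hb. subst. getpt Hpre (0,y) H1 H2. simpl. subst; ring.
    + simpl. ring.
    + intros [x y] Hp Hb E. apply isz_iff in Hb. simpl in Hb, E. subst.
      apply (jac_nz _ _ _ _ _ (0,0) Hc (proj2 (Hpre _) Hp)). rewrite jac_HyperbolicUmbilic2. ring.
    + intros [x y] Hp Hb. apply isz_iff in Hb. simpl in Hb. subst.
      pose proof (jac_nz _ _ _ _ _ _ Hc (proj2 (Hpre _) Hp)) as Hj.
      getpt Hpre (0,y) H1 H2. unfold magnification. rewrite jac_HyperbolicUmbilic2 in *.
      apply mag_eq; auto; [simpl; lra|]. subst. simpl. field.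
    + intros [x y] [x' y'] Hp Hq Hb1 Hb2 Hne.
      apply isz_f in Hb1, Hb2. simpl in Hb1, Hb2.
      pose proof (Hy x y Hp Hb1); pose proof (Hy x' y' Hq Hb2). subst y y'.
      pose proof (jac_nz _ _ _ _ _ _ Hc (proj2 (Hpre _) Hp)) as Hj.
      getpt Hpre (x,0) H1 H2. getpt Hpre (x',0) H3 H4.
      assert (x' = - x). { apply sq_neg. lra. intro; subst; auto. }
      subst x'. unfold magnification.
      assert (E1 : forall z, jacdet HyperbolicUmbilic2 c1 c2 c3 (z, 0) = -4*z^2) by (intro; rewrite jac_HyperbolicUmbilic2; ring).
      assert (EP : peval (pder (pmul [0; 1] [-s2; -2*c3; -3*c2; -4*c1; -5])) 0 = x^2) by (simpl; subst s2; ring).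
      rewrite !E1, EP. simpl. field. intro; subst; apply Hj; rewrite jac_HyperbolicUmbilic2; ring.
  - apply (gen_case _ pts (fun p => snd p)
      (padd [-s1^2/4] (pmul [0;0;1] [-s2; -2*c3; -3*c2; -4*c1; -5])) [0; -1/2; 0; 0; 0] 6);
      try (simpl; lia); auto.
    + intros [x y] [x' y'] Hp Hq E; simpl in E; subst y'.
      getpt Hpre (x,y) H1 H2. getpt Hpre (x',y) H3 H4.
      assert (Hk : y <> 0).
      { intro Hk; apply Hs; rewrite <- H1; rewrite Hk; ring. }
      assert (x = x').
      { apply (Rmult_eq_reg_l (-2*y)); [|intro; apply Hk; lra].
        transitivity s1; [rewrite <- H1|rewrite <- H3]; ring. }
      subst; auto.
    + intros [x y] Hp. getpt Hpre (x,y) H1 H2. simpl. subst. field.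
    + intros [x y] Hp. pose proof (jac_nz _ _ _ _ _ _ Hc (proj2 (Hpre _) Hp)) as Hj.
      getpt Hpre (x,y) H1 H2. unfold magnification. rewrite jac_HyperbolicUmbilic2 in *.
      apply mag_eq; auto.
      * simpl; intro Hg; apply Hs; rewrite <- H1.
        replace (-2*x*y) with (4*x*(0 + y*(-1/2 + y*(0+y*(0+y*(0+y*0)))))) by field; rewrite Hg; ring.
      * subst. simpl. field.
Qed.


Lemma jac_sym c1 c2 c3 x y : jacdet SymbolicUmbilic c1 c2 c3 (x,y) = (-6*x)*(-12*y^2 - 2*c1*x - 2*c3) - (2*c1*y + c2)^2.
Proof. unfold jacdet, fmap1, fmap2; simpl; repeat dsimp; ring. Qed.

Lemma fam_sym c1 c2 c3 s1 s2 pts : ~ caustic SymbolicUmbilic c1 c2 c3 (s1,s2) -> NoDup pts -> length pts = 6%nat ->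
  (forall p, fmap SymbolicUmbilic c1 c2 c3 p = (s1,s2) <-> In p pts) ->
  sumR (map (magnification SymbolicUmbilic c1 c2 c3) pts) = 0.
Proof.
  intros Hc Hnd Hl Hpre.
  destruct (classic (c1 = 0 /\ c2 = 0)) as [[-> ->]|Hcc].
  { apply (invol _ pts (fun p => (- fst p, snd p))); auto.
    + intros [x y] Hp. apply Hpre. rewrite <- (proj2 (Hpre _) Hp). unfold fmap; simpl. f_equal; ring.
    + intros [x y]; simpl; f_equal; ring.
    + intros [x y] Hp. unfold magnification. simpl. rewrite !jac_sym.
      pose proof (jac_nz _ _ _ _ _ _ Hc (proj2 (Hpre _) Hp)) as Hj. rewrite jac_sym in Hj.
      replace ((-6 * - x) * (-12 * y ^ 2 - 2 * 0 * - x - 2 * c3) - (2 * 0 * y + 0) ^ 2)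
        with (- ((-6 * x) * (-12 * y ^ 2 - 2 * 0 * x - 2 * c3) - (2 * 0 * y + 0) ^ 2)) by ring.
      assert (Hj2 : (-6*x)*(-12*y^2-2*c3) <> 0) by (intro E; apply Hj; transitivity ((-6*x)*(-12*y^2-2*c3)); [ring|exact E]).
      apply Rmult_neq_0_reg in Hj2. field. split; lra. }
  destruct (classic (exists x y, In (x,y) pts /\ 2*c1*y + c2 = 0)) as [[x0 [y0 [Hp0 Hw0]]]|Hnw].
  - assert (Hc1 : c1 <> 0) by (intro E; subst c1; apply Hcc; split; lra).
    assert (c2 = -2*c1*y0) by lra. subst c2.
    assert (Hs2 : s2 = -4*y0^3 - 2*c3*y0) by (getpt Hpre (x0,y0) H1 H2; lra). subst s2.
    set (Qt := padd (pscale 3 (pmul [4*y0^2 + 2*c3; 4*y0; 4] [4*y0^2 + 2*c3; 4*y0; 4])) (pscale (4*c1^2) [s1; -2*c1*y0; c1])).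
    set (P := pmul [-y0; 1] Qt).
    assert (HPf : forall y, peval P y = (y - y0) * peval Qt y) by (intro; subst P Qt; simpl; ring).
    assert (Hd : forall y, peval (pder P) y = peval Qt y + (y - y0) * peval (pder Qt) y) by (intro; subst P Qt; simpl; ring).
    assert (HK : forall x y, In (x,y) pts -> y <> y0 -> c3 = -c1*x - 2*(y^2+y*y0+y0^2)).
    { intros x y Hp Hy. getpt Hpre (x,y) H1 H2.
      assert (E : (y-y0)*(4*(y^2+y*y0+y0^2) + 2*c3 + 2*c1*x) = 0) by lra.
      apply Rmult_integral in E; destruct E as [E|E]; [exfalso; apply Hy; lra|lra]. }
    assert (HEJ : forall x y, In (x,y) pts -> y <> y0 ->
      peval Qt y = 0 /\ peval (pder P) y = -2*c1 * jacdet SymbolicUmbilic c1 (-2*c1*y0) c3 (x,y)).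
    { intros x y Hp Hy. pose proof (HK x y Hp Hy) as Hc3. getpt Hpre (x,y) H1 H2.
      rewrite jac_sym. subst P Qt. subst c3 s1. split; simpl; ring. }
    assert (Hinj : forall x y x' y', In (x,y) pts -> In (x',y') pts -> y <> y0 -> y = y' -> (x,y) = (x',y')).
    { intros x y x' y' Hp Hq Hy E. subst y'. pose proof (HK x y Hp Hy). pose proof (HK x' y Hq Hy).
      assert (x = x') by (apply (Rmult_eq_reg_l c1); auto; lra). subst; auto. }
    apply (two_branch _ pts (fun p => negb (isz (snd p - y0))) (fun p => snd p) P [-2*c1; 0; 0; 0] y0 5);
      try (simpl; lia); auto.
    + destruct (classic (zeroL Qt)) as [Hz|Hz].
      * destruct (filter (fun p => negb (isz (snd p - y0))) pts) as [|[x y] l] eqn:EA; simpl; [lia|].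
        exfalso. assert (Hin : In (x,y) (filter (fun p => negb (isz (snd p - y0))) pts)) by (rewrite EA; simpl; auto).
        apply filter_In in Hin as [Hp Hb]. apply Bool.negb_true_iff, isz_f in Hb. simpl in Hb.
        assert (Hy : y <> y0) by (intro; apply Hb; lra).
        destruct (HEJ x y Hp Hy) as [_ HJ]. rewrite Hd, (peval_zero _ _ Hz), (pder_zero _ _ Hz) in HJ.
        apply (jac_nz _ _ _ _ _ _ Hc (proj2 (Hpre _) Hp)).
        apply (Rmult_eq_reg_l (-2*c1)); [|intro; apply Hc1; lra]. rewrite <- HJ. ring.
      * apply (filter_bound _ _ (fun p => snd p) Qt); auto.
        -- intros [x y] [x' y'] Hp Hq Hb1 Hb2 E. apply Bool.negb_true_iff, isz_f in Hb1. simpl in *.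
           apply Hinj; auto. intro; apply Hb1; lra.
        -- intros [x y] Hp Hb. apply Bool.negb_true_iff, isz_f in Hb. simpl in *.
           apply (HEJ x y Hp). intro; apply Hb; lra.
    + apply (filter_bound _ _ (fun p => fst p) [s1 - c1*y0^2; 0; 3]); auto.
      * intros [x y] [x' y'] Hp Hq Hb1 Hb2 E. simpl in *.
        rewrite Bool.negb_involutive in Hb1, Hb2. apply isz_iff in Hb1, Hb2. simpl in *.
        subst. f_equal; lra.
      * intros [x y] Hp Hb. rewrite Bool.negb_involutive in Hb. apply isz_iff in Hb. simpl in Hb.
        assert (y = y0) by lra. subst y. getpt Hpre (x,y0) H1 H2. simpl. subst s1. ring.
      * intro Hz. unfold zeroL in Hz. repeat (apply Forall_cons_iff in Hz as [? Hz]). lra.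
    + intros [x y] [x' y'] Hp Hq Hb1 Hb2 E. apply Bool.negb_true_iff, isz_f in Hb1. simpl in *.
      apply Hinj; auto. intro; apply Hb1; lra.
    + intros [x y] Hp Hb. apply Bool.negb_true_iff, isz_f in Hb. simpl in *.
      rewrite HPf, (proj1 (HEJ x y Hp ltac:(intro; apply Hb; lra))). ring.
    + rewrite HPf; ring.
    + intros [x y] Hp Hb E. apply Bool.negb_true_iff, isz_f in Hb. simpl in *. apply Hb; lra.
    + intros [x y] Hp Hb. apply Bool.negb_true_iff, isz_f in Hb. simpl in *.
      pose proof (jac_nz _ _ _ _ _ _ Hc (proj2 (Hpre _) Hp)) as Hj.
      unfold magnification. apply mag_eq; auto.
      * simpl. intro; apply Hc1; lra.
      * rewrite (proj2 (HEJ x y Hp ltac:(intro; apply Hb; lra))). simpl. ring.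
    + intros [x y] [x' y'] Hp Hq Hb1 Hb2 Hne.
      apply Bool.negb_false_iff, isz_iff in Hb1, Hb2. simpl in Hb1, Hb2.
      assert (y = y0) by lra. assert (y' = y0) by lra. subst y y'.
      pose proof (jac_nz _ _ _ _ _ _ Hc (proj2 (Hpre _) Hp)) as Hj.
      pose proof (jac_nz _ _ _ _ _ _ Hc (proj2 (Hpre _) Hq)) as Hj'.
      getpt Hpre (x,y0) H1 H2. getpt Hpre (x',y0) H3 H4.
      assert (x' = - x). { apply sq_neg. lra. intro; subst; auto. }
      subst x'. unfold magnification.
      assert (E1 : forall z, jacdet SymbolicUmbilic c1 (-2*c1*y0) c3 (z, y0) = 6*z*((12*y0^2+2*c3) + 2*c1*z))
        by (intro; rewrite jac_sym; ring).
      assert (EP : peval (pder P) y0 = 3*((12*y0^2+2*c3) - 2*c1*x)*((12*y0^2+2*c3) + 2*c1*x))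
        by (rewrite Hd; subst Qt; simpl; subst s1; ring).
      rewrite E1 in Hj, Hj'. rewrite !E1, EP. simpl.
      assert (Hx : x <> 0) by (intro; apply Hj; subst; ring).
      assert (Ha : (12*y0^2+2*c3) + 2*c1*x <> 0) by (intro E; apply Hj; rewrite E; ring).
      assert (Hb : (12*y0^2+2*c3) - 2*c1*x <> 0)
        by (intro E; apply Hj'; replace ((12*y0^2+2*c3) + 2*c1*-x) with ((12*y0^2+2*c3) - 2*c1*x) by ring; rewrite E; ring).
      field. repeat split; try assumption; intro E; first [apply Ha; lra | apply Hb; lra].
  - apply (gen_case _ pts (fun p => snd p)
      (padd (pscale 3 (pmul [s2; 2*c3; 0; 4] [s2; 2*c3; 0; 4])) (pmul [s1; c2; c1] (pmul [c2; 2*c1] [c2; 2*c1])))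
      [-c2; -2*c1; 0; 0; 0] 6); try (simpl; lia); auto.
    + intros [x y] [x' y'] Hp Hq E; simpl in E; subst y'.
      getpt Hpre (x,y) H1 H2. getpt Hpre (x',y) H3 H4.
      assert (Hk : 2*c1*y + c2 <> 0) by (intro; apply Hnw; exists x, y; auto).
      assert (x = x').
      { apply (Rmult_eq_reg_l (2*c1*y + c2)); auto. lra. }
      subst; auto.
    + intros [x y] Hp. getpt Hpre (x,y) H1 H2. simpl. subst. ring.
    + intros [x y] Hp. pose proof (jac_nz _ _ _ _ _ _ Hc (proj2 (Hpre _) Hp)) as Hj.
      assert (Hk : 2*c1*y + c2 <> 0) by (intro; apply Hnw; exists x, y; auto).
      getpt Hpre (x,y) H1 H2. unfold magnification. rewrite jac_sym in *.
      apply mag_eq; auto.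
      * simpl; intro Hg; apply Hk. lra.
      * subst. simpl. ring.
Qed.

Theorem theorem1 :
  forall (fam : catastrophe) (c1 c2 c3 s1 s2 : R) (pts : list (R * R)),
    ~ caustic fam c1 c2 c3 (s1, s2) ->
    NoDup pts ->
    length pts = Nmax fam ->
    (forall p : R * R, fmap fam c1 c2 c3 p = (s1, s2) <-> In p pts) ->
    sumR (map (magnification fam c1 c2 c3) pts) = 0.
Proof.
  intros fam c1 c2 c3 s1 s2 pts Hc Hnd Hl Hpre.
  destruct fam; simpl in Hl.
  - apply (fam_fold c1 c2 c3 s1 s2); auto.
  - apply (fam_cusp c1 c2 c3 s1 s2); auto.
  - apply (fam_swallow c1 c2 c3 s1 s2); auto.
  - apply (fam_ell c1 c2 c3 s1 s2); auto.
  - apply (fam_hyp c1 c2 c3 s1 s2); auto.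
  - apply (fam_butter c1 c2 c3 s1 s2); auto.
  - apply (fam_par c1 c2 c3 s1 s2); auto.
  - apply (fam_wig c1 c2 c3 s1 s2); auto.
  - apply (fam_sym c1 c2 c3 s1 s2); auto.
  - apply (fam_EllipticUmbilic2 c1 c2 c3 s1 s2); auto.
  - apply (fam_HyperbolicUmbilic2 c1 c2 c3 s1 s2); auto.
Qed.
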